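(* Let $x,y:\mathbb{Z}\to\mathbb{R}$ be the coordinates of the vertices of a polygon indexed by $u\in\mathbb{Z}$, let $X+ih_1$, $Y+ih_2$ be their discrete analytic extensions, $h=(h_1,h_2)$, and let $F:\mathbb{Z}^2\to\mathbb{R}$ satisfy $F(u+1,v)-F(u,v)=-[h(u+\tfrac12,v-\tfrac12),h(u+\tfrac12,v+\tfrac12)]$ and $F(u,v+1)-F(u,v)=[h(u-\tfrac12,v+\tfrac12),h(u+\tfrac12,v+\tfrac12)]$. Let $Q=(X,Y,F):\mathbb{Z}^2\to\mathbb{R}^3$. Then $Q$ is a discrete definite improper affine sphere: for every $(u,v)\in\mathbb{Z}^2$ the four points $Q(u,v),Q(u+1,v),Q(u,v+1),Q(u+1,v+1)$ are coplanar, and the discrete Laplacian $Q(u+1,v)+Q(u,v+1)+Q(u-1,v)+Q(u,v-1)-4Q(u,v)$ is parallel to the $z$-axis.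
   Context: $[X,Y]$ is the $2\times2$ determinant with columns $X,Y$. With $(\mathbb{Z}^2)^*=(\mathbb{Z}+\tfrac12)^2$, functions $g:\mathbb{Z}^2\to\mathbb{R}$, $k:(\mathbb{Z}^2)^*\to\mathbb{R}$ form a discrete analytic function $g+ik$ if $g(u+1,v)-g(u,v)=k(u+\tfrac12,v+\tfrac12)-k(u+\tfrac12,v-\tfrac12)$ and $g(u,v+1)-g(u,v)=-(k(u+\tfrac12,v+\tfrac12)-k(u-\tfrac12,v+\tfrac12))$ for all $(u,v)$. The discrete analytic extension of $x$ is the unique $X+ih_1$ with $X(u,0)=x(u)$ and $h_1(u+\tfrac12,\tfrac12)=-h_1(u+\tfrac12,-\tfrac12)$; likewise $Y+ih_2$ for $y$. A map $Q:\mathbb{Z}^2\to\mathbb{R}^3$ is a discrete definite improper affine sphere if all elementary quadrilaterals $Q(u,v),Q(u+1,v),Q(u,v+1),Q(u+1,v+1)$ are planar and there is a fixed direction $\xi$ to which every discrete Laplacian of $Q$ is parallel. *)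

(* Defs.v *)
From HB Require Import structures.
From mathcomp Require Import all_boot all_order all_algebra.
From mathcomp Require Import reals.
Set Implicit Arguments. Unset Strict Implicit. Unset Printing Implicit Defensive.
Import Order.TTheory GRing.Theory Num.Theory.
Local Open Scope ring_scope.

(* Convention: the dual lattice (Z^2)^* = (Z+1/2)^2 is indexed by Z^2:
   a function k : int -> int -> R on the dual lattice is read as
   k a b = k(a + 1/2, b + 1/2). *)

Definition det2 (R : ringType) (X Y : R * R) : R := X.1 * Y.2 - X.2 * Y.1.

(* g + i k is discrete analytic:
   g(u+1,v)-g(u,v) = k(u+1/2,v+1/2) - k(u+1/2,v-1/2)
   g(u,v+1)-g(u,v) = -(k(u+1/2,v+1/2) - k(u-1/2,v+1/2)). *)
Definition discrete_analytic (R : ringType) (g k : int -> int -> R) : Prop :=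
  forall u v : int,
    g (u + 1) v - g u v = k u v - k u (v - 1) /\
    g u (v + 1) - g u v = - (k u v - k (u - 1) v).

Definition discrete_analytic_extension (R : ringType)
    (x : int -> R) (X h : int -> int -> R) : Prop :=
  [/\ discrete_analytic X h,
      forall u : int, X u 0 = x u
    & forall u : int, h u 0 = - h u (-1)].

Definition pt3 (R : ringType) (a b c : R) : 'rV[R]_3 :=
  \row_(i < 3) [:: a; b; c]`_i.

Definition coplanar4 (R : comRingType) (P0 P1 P2 P3 : 'rV[R]_3) : Prop :=
  \det (col_mx (P1 - P0) (col_mx (P2 - P0) (P3 - P0)) : 'M[R]_(1 + (1 + 1), 3)) = 0.

Definition discrete_laplacian (R : ringType) (Q : int -> int -> 'rV[R]_3)
  (u v : int) : 'rV[R]_3 :=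
  Q (u + 1) v + Q u (v + 1) + Q (u - 1) v + Q u (v - 1) - 4%:R *: Q u v.

Definition ez (R : ringType) : 'rV[R]_3 := pt3 0 0 1.

Definition parallel (R : ringType) (w xi : 'rV[R]_3) : Prop :=
  exists c : R, w = c *: xi.

(* Main.v *)
Require Import Defs.
From HB Require Import structures.
From mathcomp Require Import all_boot all_order all_algebra.
From mathcomp Require Import reals.
From mathcomp Require Import ring.
Import Order.TTheory GRing.Theory Num.Theory.
Local Open Scope ring_scope.
Lemma solve (R : ringType) (a b c : R) : a - b = c -> a = b + c.
Proof. by move=> <-; rewrite addrC subrK. Qed.
Theorem mainTheorem11 (R : realType) (x y : int -> R)
    (X Y h1 h2 F : int -> int -> R) :
  discrete_analytic_extension x X h1 ->
  discrete_analytic_extension y Y h2 ->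
  (forall u v : int,
     F (u + 1) v - F u v = - det2 (h1 u (v - 1), h2 u (v - 1)) (h1 u v, h2 u v) /\
     F u (v + 1) - F u v = det2 (h1 (u - 1) v, h2 (u - 1) v) (h1 u v, h2 u v)) ->
  let Q := fun u v : int => pt3 (X u v) (Y u v) (F u v) in
  (forall u v : int,
     coplanar4 (Q u v) (Q (u + 1) v) (Q u (v + 1)) (Q (u + 1) (v + 1))) /\
  (forall u v : int, parallel (discrete_laplacian Q u v) (ez R)).
Proof.
move=> [hX _ _] [hY _ _] hF Q; split=> u v.
- rewrite /coplanar4 -det_tr; apply/eqP/det0P.
  exists (\row_(i < 3) [:: h2 u v; - h1 u v; -1]`_i).
    apply/eqP => /rowP /(_ (@Ordinal 3 2 isT)); rewrite !mxE /=.
    by move/eqP; rewrite oppr_eq0 oner_eq0.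
  have [/solve X1 /solve X3] := hX u v.
  have [/solve Y1 /solve Y3] := hY u v.
  have [/solve F1 /solve F3] := hF u v.
  have [X4 _] := hX u (v+1); have [Y4 _] := hY u (v+1); have [F4 _] := hF u (v+1).
  rewrite addrK in X4 Y4 F4. move/solve: X4 => X4. move/solve: Y4 => Y4. move/solve: F4 => F4.
  apply: trmx_inj; rewrite trmx_mul trmxK trmx0 !mul_col_mx.
  have E : forall a b c : R, forall P : 'rV[R]_3, P = pt3 a b c ->
     P *m (\row_(i < 3) [:: h2 u v; - h1 u v; -1]`_i)^T = (a * h2 u v - b * h1 u v - c)%:M.
    move=> a b c P ->; apply/rowP => i; rewrite !mxE big_ord_recr big_ord_recr big_ord1 /= !mxE /=.
    rewrite ord1 /=; ring.
  rewrite (E (X (u+1) v - X u v) (Y (u+1) v - Y u v) (F (u+1) v - F u v)); last first.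
    by apply/rowP => i; rewrite !mxE; case: i => [[|[|[|]]] ?].
  rewrite (E (X u (v+1) - X u v) (Y u (v+1) - Y u v) (F u (v+1) - F u v)); last first.
    by apply/rowP => i; rewrite !mxE; case: i => [[|[|[|]]] ?].
  rewrite (E (X (u+1) (v+1) - X u v) (Y (u+1) (v+1) - Y u v) (F (u+1) (v+1) - F u v)); last first.
    by apply/rowP => i; rewrite !mxE; case: i => [[|[|[|]]] ?].
  rewrite X4 Y4 F4 X1 Y1 F1 X3 Y3 F3 /det2 /= -[0 in RHS]col_mx0 -col_mx0.
  congr (col_mx _ (col_mx _ _)); rewrite -scalemx1 -[0 in RHS](scale0r 1%:M); congr (_ *: _); ring.
- have [X1 X3] := hX u v.
  have [Y1 Y3] := hY u v.
  have [X2 _] := hX (u-1) v; have [Y2 _] := hY (u-1) v.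
  have [_ X4] := hX u (v-1); have [_ Y4] := hY u (v-1).
  have eu : u - 1 + 1 = u by rewrite subrK.
  have ev : v - 1 + 1 = v by rewrite subrK.
  rewrite eu in X2 Y2; rewrite ev in X4 Y4.
  exists (F (u + 1) v + F u (v + 1) + F (u - 1) v + F u (v - 1) - 4%:R * F u v).
  apply/rowP => j; rewrite /discrete_laplacian /Q /pt3 /ez !mxE.
  case: j => [[|[|[|]]] //= ?]; rewrite ?mulr0 ?mulr1.
  + apply/eqP; rewrite -subr_eq0; apply/eqP.
    transitivity ((X (u + 1) v - X u v) - (X u v - X (u - 1) v) + (X u (v + 1) - X u v) - (X u v - X u (v - 1))); first ring.
    rewrite X1 X2 X3 X4; ring.
  + apply/eqP; rewrite -subr_eq0; apply/eqP.
    transitivity ((Y (u + 1) v - Y u v) - (Y u v - Y (u - 1) v) + (Y u (v + 1) - Y u v) - (Y u v - Y u (v - 1))); first ring.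
    rewrite Y1 Y2 Y3 Y4; ring.
  + ring.
Qed.
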